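(* Let $T$ be a $3\times2\times3$ quaternion tensor, i.e. $T=(A;B)$ with $A,B\in M_3(\mathbb{H})$. Then $\mathrm{rank}(T)\le4$.
   Context: $\mathbb{H}$ denotes the real quaternions. An $n_1\times n_2\times n_3$ quaternion tensor is an array $T=(T_{ijk})$ with entries in $\mathbb{H}$, $1\le i\le n_1$, $1\le j\le n_2$, $1\le k\le n_3$; it is written $T=(A_1;\dots;A_{n_2})$ where the frontal slice $A_j$ is the $n_1\times n_3$ matrix $(T_{ijk})_{i,k}$. A nonzero tensor is simple if $T_{ijk}=a_ib_jc_k$ (quaternion product in this order) for some $\vec a\in\mathbb{H}^{n_1},\vec b\in\mathbb{H}^{n_2},\vec c\in\mathbb{H}^{n_3}$. The rank of $T$ is the least number of simple tensors summing to $T$ (the zero tensor has rank $0$). *)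

(* Defs.v *)
From mathcomp Require Import all_boot all_order all_algebra.
Set Implicit Arguments. Unset Strict Implicit. Unset Printing Implicit Defensive.
Import Order.TTheory GRing.Theory Num.Theory.
Local Open Scope ring_scope.

(* Real quaternions over a real closed field R:  q = re + i*x + j*y + k*z,
   with i^2 = j^2 = k^2 = ijk = -1. *)
Record quat (R : rcfType) := Quat { qre : R; qi : R; qj : R; qk : R }.

Section Quat.
Variable R : rcfType.

Definition qzero : quat R := Quat 0 0 0 0.
Definition qadd (p q : quat R) : quat R :=
  Quat (qre p + qre q) (qi p + qi q) (qj p + qj q) (qk p + qk q).
Definition qmul (p q : quat R) : quat R :=
  Quat (qre p * qre q - qi p * qi q - qj p * qj q - qk p * qk q)
       (qre p * qi q + qi p * qre q + qj p * qk q - qk p * qj q)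
       (qre p * qj q - qi p * qk q + qj p * qre q + qk p * qi q)
       (qre p * qk q + qi p * qj q - qj p * qi q + qk p * qre q).

(* n1 x n2 x n3 quaternion tensors: T i j k = T_{ijk};
   frontal slice A_j = (T i j k)_{i,k}. *)
Definition qtensor (n1 n2 n3 : nat) := 'I_n1 -> 'I_n2 -> 'I_n3 -> quat R.

Definition simple_tensor n1 n2 n3 (T : qtensor n1 n2 n3) : Prop :=
  (exists i j k, T i j k <> qzero) /\
  exists (a : 'I_n1 -> quat R) (b : 'I_n2 -> quat R) (c : 'I_n3 -> quat R),
    forall i j k, T i j k = qmul (qmul (a i) (b j)) (c k).

Definition tsum n1 n2 n3 (S : seq (qtensor n1 n2 n3)) : qtensor n1 n2 n3 :=
  fun i j k => foldr qadd qzero [seq t i j k | t <- S].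

Definition qrank_le n1 n2 n3 (T : qtensor n1 n2 n3) (r : nat) : Prop :=
  exists (m : nat) (S : 'I_m -> qtensor n1 n2 n3),
    (m <= r)%N /\ (forall l, simple_tensor (S l)) /\
    forall i j k, T i j k = tsum [seq S l | l <- enum 'I_m] i j k.

End Quat.

(* Main.v *)
Require Import Defs.
From mathcomp Require Import all_boot all_order all_algebra.
From HB Require Import structures.
From mathcomp Require Import ring lra.
From Stdlib Require Import Classical.
From mathcomp Require Import fingroup perm.
Set Implicit Arguments. Unset Strict Implicit. Unset Printing Implicit Defensive.
Import Order.TTheory GRing.Theory Num.Theory.
Local Open Scope ring_scope.

Section QuatRing.
Variable R : rcfType.
Definition q2t (q : quat R) := (qre q, qi q, qj q, qk q).
Definition t2q (t : R * R * R * R) := Quat t.1.1.1 t.1.1.2 t.1.2 t.2.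
Lemma q2tK : cancel q2t t2q. Proof. by case. Qed.
HB.instance Definition _ := Equality.copy (quat R) (can_type q2tK).
HB.instance Definition _ := Choice.copy (quat R) (can_type q2tK).

Lemma quatP (p q : quat R) : qre p = qre q -> qi p = qi q -> qj p = qj q -> qk p = qk q -> p = q.
Proof. by case: p => ????; case: q => ???? /= -> -> -> ->. Qed.

Definition qopp (p : quat R) := Quat (- qre p) (- qi p) (- qj p) (- qk p).
Lemma qaddA : associative (@qadd R).
Proof. by move=> *; apply: quatP => /=; ring. Qed.
Lemma qaddC : commutative (@qadd R).
Proof. by move=> *; apply: quatP => /=; ring. Qed.
Lemma qadd0 : left_id (qzero R) (@qadd R).
Proof. by move=> *; apply: quatP => /=; ring. Qed.
Lemma qaddN : left_inverse (qzero R) qopp (@qadd R).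
Proof. by move=> *; apply: quatP => /=; ring. Qed.
HB.instance Definition _ := GRing.isZmodule.Build (quat R) qaddA qaddC qadd0 qaddN.
Definition qone : quat R := Quat 1 0 0 0.
Lemma qmulA : associative (@qmul R).
Proof. by move=> *; apply: quatP => /=; ring. Qed.
Lemma qmul1 : left_id qone (@qmul R).
Proof. by move=> *; apply: quatP => /=; ring. Qed.
Lemma qmulr1 : right_id qone (@qmul R).
Proof. by move=> *; apply: quatP => /=; ring. Qed.
Lemma qmulDl : left_distributive (@qmul R) +%R.
Proof. by move=> *; apply: quatP => /=; ring. Qed.
Lemma qmulDr : right_distributive (@qmul R) +%R.
Proof. by move=> *; apply: quatP => /=; ring. Qed.
Lemma qone_neq0 : qone != 0.
Proof. apply/eqP => /(congr1 (@qre R)) /= /eqP; by rewrite oner_eq0. Qed.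
HB.instance Definition _ := GRing.Zmodule_isNzRing.Build (quat R) qmulA qmul1 qmulr1 qmulDl qmulDr qone_neq0.

Lemma qreD (p q : quat R) : qre (p + q) = qre p + qre q. Proof. by []. Qed.
Lemma test (x y z : quat R) : x * (y + z) - x * z = x * y.
Proof. apply: quatP => /=; ring. Qed.
Definition qnorm (q : quat R) := qre q ^+ 2 + qi q ^+ 2 + qj q ^+ 2 + qk q ^+ 2.
Definition qinv (q : quat R) : quat R :=
  Quat (qre q / qnorm q) (- qi q / qnorm q) (- qj q / qnorm q) (- qk q / qnorm q).
Lemma qnorm_eq0 q : (qnorm q == 0) = (q == 0).
Proof.
apply/idP/idP; last by move/eqP->; rewrite /qnorm /= expr0n /= !addr0.
rewrite /qnorm !paddr_eq0 ?sqr_ge0 ?addr_ge0 ?sqr_ge0 // !sqrf_eq0.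
case/andP=> /andP [/andP [/eqP a /eqP b] /eqP c] /eqP d.
by apply/eqP; apply: quatP.
Qed.
Lemma qmulVq q : q != 0 -> qinv q * q = 1.
Proof.
rewrite -qnorm_eq0 => nz; apply: quatP => /=; rewrite /qnorm in nz *; field; done.
Qed.
Lemma qmulqV q : q != 0 -> q * qinv q = 1.
Proof.
rewrite -qnorm_eq0 => nz; apply: quatP => /=; rewrite /qnorm in nz *; field; done.
Qed.
Lemma mulq_eq0l (x t : quat R) : x != 0 -> x * t = 0 -> t = 0.
Proof. by move=> nz e; rewrite -[t]mul1r -(qmulVq nz) -mulrA e mulr0. Qed.
Lemma mulq_eq0r (x t : quat R) : x != 0 -> t * x = 0 -> t = 0.
Proof. by move=> nz e; rewrite -[t]mulr1 -(qmulqV nz) mulrA e mul0r. Qed.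
Lemma qinv_neq0 (x : quat R) : x != 0 -> qinv x != 0.
Proof. move=> nz; apply/eqP=> e; move: (qmulVq nz); rewrite e mul0r => /eqP; by rewrite eq_sym oner_eq0. Qed.

Local Notation H := (quat R).
Definition injm m n (M : 'M[H]_(m, n)) := forall x : 'cV_n, M *m x = 0 -> x = 0.

Lemma cV_neq0 n (z : 'cV[H]_n) : z != 0 -> exists k, z k 0 != 0.
Proof.
move=> nz; apply/not_all_not_ex => /= h; move/eqP: nz; apply; apply/matrixP=> i j.
by rewrite ord1 mxE; apply/eqP/negPn/negP/h.
Qed.

Lemma HS_pivot m n (M : 'M[H]_(1 + m, 1 + n)) :
  (forall (N : 'M[H]_(m, n)), exists2 w : 'cV_n, w != 0 & N *m w = 0) ->
  M 0 0 != 0 -> exists2 z : 'cV_(1 + n), z != 0 & M *m z = 0.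
Proof.
move=> IH p0.
set p := M 0 0.
have ulE : ulsubmx M = p%:M.
  rewrite [LHS]mx11_scalar mxE /p; congr (_ %:M).
  by rewrite !mxE; congr (M _ _); apply: val_inj.
set u := ursubmx M; set v := dlsubmx M; set N := drsubmx M.
have [w wnz Nw] := IH (N - v *m (qinv p *: u)).
exists (col_mx (- ((qinv p *: u) *m w)) w).
  by apply/negP => /eqP/(congr1 dsubmx); rewrite col_mxKd linear0 => /eqP; apply/negP.
rewrite -[M]submxK mul_block_col ulE mul_scalar_mx -/u -/v -/N.
rewrite scalerN -scalemxAl scalerA (qmulqV p0) scale1r addNr.
rewrite scalemxAl (mulmxN v) mulmxA -mulNmx -mulmxDl addrC.
by rewrite Nw col_mx0.
Qed.

Lemma HS m n (M : 'M[H]_(m, n)) : (m < n)%N -> exists2 z : 'cV_n, z != 0 & M *m z = 0.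
Proof.
elim: m n M => [|m IH] [|n] M //= lt.
  exists (delta_mx 0 0); last exact: flatmx0.
  by apply/negP=> /eqP/matrixP/(_ 0 0); rewrite !mxE /= => /eqP; rewrite oner_eq0.
case: (boolP [forall i, M i 0 == 0]) => [/forallP h|].
  exists (delta_mx 0 0).
    by apply/negP=> /eqP/matrixP/(_ 0 0); rewrite !mxE /= => /eqP; rewrite oner_eq0.
  apply/matrixP=> i j; rewrite ord1 !mxE (bigD1 0) //= big1 ?addr0.
    by rewrite !mxE /= mulr1; apply/eqP.
  by move=> k /negPf k0; rewrite !mxE k0 /= mulr0.
rewrite negb_forall => /existsP [r Mr].
have p0 : xrow 0 r M 0 0 != 0 by rewrite /xrow /row_perm mxE tpermL.
have [z zn Mz] := @HS_pivot m n (xrow 0 r M) (fun N => IH n N lt) p0.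
exists z => //.
move: Mz; rewrite xrowE -mulmxA -xrowE => /(congr1 (xrow 0 r)).
by rewrite /xrow -row_permM tperm2 row_perm1 => ->; rewrite /xrow /row_perm; apply/matrixP=> i j; rewrite !mxE.
Qed.

Lemma scalar_mx0 n : (0 : H)%:M = 0 :> 'M_n. Proof. exact: raddf0. Qed.
Lemma scalar_mxD n (a b : H) : (a + b)%:M = a%:M + b%:M :> 'M_n. Proof. exact: raddfD. Qed.
Lemma scalar_mxN n (a : H) : (- a)%:M = - a%:M :> 'M_n. Proof. exact: raddfN. Qed.
Lemma mx1E (X : 'M[H]_1) : X = (X 0 0)%:M. Proof. exact: mx11_scalar. Qed.

Lemma solve_aux n p (Z0 : 'M[H]_(n, p)) (y : 'cV_n) (z : 'cV_(p + 1)) :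
  injm Z0 -> z != 0 -> row_mx Z0 y *m z = 0 -> exists x, Z0 *m x = y.
Proof.
move=> inj nz; rewrite -[z]vsubmxK mul_row_col [dsubmx z]mx1E.
set x' := usubmx z; set s := dsubmx z 0 0 => e.
case: (eqVneq s 0) => s0.
  move: e; rewrite s0 scalar_mx0 mulmx0 addr0 => /inj x0.
  by move: nz; rewrite -[z]vsubmxK -/x' x0 [dsubmx z]mx1E -/s s0 scalar_mx0 col_mx0 eqxx.
exists (- (x' *m (qinv s)%:M)).
rewrite mulmxN mulmxA.
have -> : Z0 *m x' = - (y *m s%:M) by apply/eqP; rewrite -subr_eq0 opprK e.
by rewrite mulNmx opprK -mulmxA -scalar_mxM (qmulqV s0) mulmx1.
Qed.

Lemma inj_solve n (M : 'M[H]_n) : injm M -> forall y : 'cV_n, exists x, M *m x = y.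
Proof.
move=> inj y; have [|z nz e] := @HS _ _ (row_mx M y); first by rewrite addn1.
exact: solve_aux e.
Qed.

Lemma mul_cols m n p (M : 'M[H]_(m, n)) (f : 'I_p -> 'cV_n) :
  M *m (\matrix_(i, k) f k i 0) = \matrix_(i, k) (M *m f k) i 0.
Proof. by apply/matrixP=> i k; rewrite !mxE; apply: eq_bigr => j _; rewrite mxE. Qed.

Lemma inj_rinv n (M : 'M[H]_n) : injm M -> exists Q, M *m Q = 1%:M.
Proof.
move=> inj.
have /fin_all_exists [f hf] : forall k : 'I_n, exists x : 'cV_n, M *m x = col k 1%:M.
  by move=> k; apply: inj_solve.
exists (\matrix_(i, k) f k i 0); rewrite mul_cols; apply/matrixP=> i k.
by rewrite mxE hf !mxE.
Qed.

Lemma ext n p (Z0 : 'M[H]_(n, p)) : (p < n)%N -> injm Z0 ->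
  exists k : 'I_n, injm (row_mx Z0 (delta_mx k 0 : 'cV_n)).
Proof.
move=> lt inj; apply: NNPP => hn.
have /fin_all_exists [f hf] : forall k : 'I_n, exists x : 'cV_p, Z0 *m x = delta_mx k 0.
  move=> k.
  have : ~ injm (row_mx Z0 (delta_mx k 0 : 'cV_n)) by move=> h; apply: hn; exists k.
  move=> hk; have [z hz] := not_all_ex_not _ _ hk; have [e nz] := imply_to_and _ _ hz.
  by apply: (solve_aux inj _ e); apply/eqP.
have [y ynz Cy] := HS (\matrix_(i, k) f k i 0) lt.
have : Z0 *m (\matrix_(i, k) f k i 0) = 1%:M.
  rewrite mul_cols; apply/matrixP=> i k; by rewrite mxE hf !mxE eqxx andbT.
move/(congr1 (mulmx^~ y)); rewrite -mulmxA Cy mulmx0 mul1mx => y0.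
by move: ynz; rewrite -y0 eqxx.
Qed.

Definition term := ('cV[H]_3 * H * H * 'rV[H]_3)%type.
Definition tA (t : term) : 'M[H]_3 := t.1.1.1 *m (t.1.1.2 *: t.2).
Definition tB (t : term) : 'M[H]_3 := t.1.1.1 *m (t.1.2 *: t.2).
Definition Dec (A B : 'M[H]_3) (n : nat) := exists s : seq term,
  (size s <= n)%N /\ A = \sum_(t <- s) tA t /\ B = \sum_(t <- s) tB t.

Definition qh : H := Quat (1/2) 0 0 0.

Lemma chain3 (p1 p2 p3 w : 'cV[H]_3) (q1 q2 q3 : 'rV[H]_3) :
  Dec (p1 *m q1 + p2 *m q2 + p3 *m q3) (p2 *m q1 + p3 *m q2 + w *m q3) 4.
Proof.
exists [:: (p1 - p3, 1, 0, q1); (p2 + p3, qh, qh, q1 + q2 + q3);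
           (p2 - p3, qh, - qh, - q1 + q2 - q3); (w - p2, 0, 1, q3)].
split => //; rewrite !big_cons !big_nil /tA /tB /=.
split; apply/matrixP => i k; rewrite !mxE !big_ord1 !mxE;
  apply: quatP => /=; rewrite /qh /=.
all: by field.
Qed.

Lemma chain2 (p1 p2 w : 'cV[H]_3) (q1 q2 : 'rV[H]_3) :
  Dec (p1 *m q1 + p2 *m q2) (p2 *m q1 + w *m q2) 3.
Proof.
exists [:: (p1 + p2, qh, qh, q1 + q2); (p1 - p2, qh, - qh, q1 - q2); (w - p1, 0, 1, q2)].
split => //; rewrite !big_cons !big_nil /tA /tB /=.
split; apply/matrixP => i k; rewrite !mxE !big_ord1 !mxE;
  apply: quatP => /=; rewrite /qh /=; by field.
Qed.
End QuatRing.

Section Part5.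
Variable R : rcfType.
Local Notation H := (quat R).

Lemma Dec_eq (A B A' B' : 'M[H]_3) n : Dec A B n -> A = A' -> B = B' -> Dec A' B' n.
Proof. by move=> d <- <-. Qed.

Lemma Dec_le (A B : 'M[H]_3) n n' : Dec A B n -> (n <= n')%N -> Dec A B n'.
Proof. by case=> s [sz [eA eB]] le; exists s; split => //; apply: leq_trans le. Qed.

Lemma Dec_add (A B A' B' : 'M[H]_3) n n' : Dec A B n -> Dec A' B' n' -> Dec (A + A') (B + B') (n + n').
Proof.
case=> s [sz [eA eB]] [s' [sz' [eA' eB']]]; exists (s ++ s'); split.
  by rewrite size_cat leq_add.
by rewrite !big_cat /= eA eB eA' eB'.
Qed.

Lemma Dec_term (a : 'cV[H]_3) b0 b1 c : Dec (a *m (b0 *: c)) (a *m (b1 *: c)) 1.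
Proof. by exists [:: (a, b0, b1, c)]; rewrite !big_cons !big_nil !addr0. Qed.

Lemma Dec_mulr (A B Q : 'M[H]_3) n : Dec A B n -> Dec (A *m Q) (B *m Q) n.
Proof.
case=> s [sz [eA eB]].
exists [seq (t.1.1.1, t.1.1.2, t.1.2, t.2 *m Q) | t <- s]; rewrite size_map; split => //.
rewrite !big_map eA eB !mulmx_suml /tA /tB /=; split; apply: eq_bigr => t _;
  by rewrite -mulmxA scalemxAl.
Qed.

Definition inj2 (a b : 'cV[H]_3) := forall s t : H, a *m s%:M + b *m t%:M = 0 -> s = 0 /\ t = 0.
Definition inj3 (a b c : 'cV[H]_3) := forall s t u : H,
  a *m s%:M + b *m t%:M + c *m u%:M = 0 -> [/\ s = 0, t = 0 & u = 0].

Lemma scal_eq0 n (s : H) : (s%:M == 0 :> 'M_n.+1) = (s == 0).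
Proof.
apply/eqP/eqP => [/matrixP/(_ 0 0)|->]; last exact: scalar_mx0.
by rewrite !mxE eqxx mulr1n.
Qed.

Lemma inj2P (a b : 'cV[H]_3) : inj2 a b <-> injm (row_mx a b).
Proof.
split => [h x|h s t e].
  rewrite -[x]vsubmxK mul_row_col [usubmx x]mx1E [dsubmx x]mx1E => /h [-> ->].
  by rewrite !scalar_mx0 col_mx0.
have := h (col_mx s%:M t%:M); rewrite mul_row_col => /(_ e) /eqP.
by rewrite col_mx_eq0 !scal_eq0 => /andP [/eqP -> /eqP ->].
Qed.

Lemma inj3P (a b c : 'cV[H]_3) : inj3 a b c <-> injm (row_mx (row_mx a b) c).
Proof.
split => [h x|h s t u e].
  rewrite -[x]vsubmxK mul_row_col -[usubmx x]vsubmxK mul_row_col.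
  rewrite [usubmx (usubmx x)]mx1E [dsubmx (usubmx x)]mx1E [dsubmx x]mx1E => /h [-> -> ->].
  by rewrite !scalar_mx0 !col_mx0.
have := h (col_mx (col_mx s%:M t%:M) u%:M); rewrite !mul_row_col => /(_ e) /eqP.
by rewrite !col_mx_eq0 !scal_eq0 => /andP [/andP [/eqP -> /eqP ->] /eqP ->].
Qed.

Lemma vcancel (z : 'cV[H]_3) s : z != 0 -> z *m s%:M = 0 -> s = 0.
Proof.
move=> /cV_neq0 [k nz] /matrixP /(_ k 0); rewrite !mxE big_ord1 !mxE eqxx mulr1n.
exact: mulq_eq0l.
Qed.

Lemma inj1 (z : 'cV[H]_3) : z != 0 -> injm z.
Proof.
move=> nz x; rewrite [x]mx1E => /(vcancel nz) ->; exact: scalar_mx0.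
Qed.

Lemma decomp3 (z0 z1 z2 : 'cV[H]_3) : inj3 z0 z1 z2 ->
  exists q0 q1 q2 : 'rV[H]_3, forall A : 'M[H]_3,
    A = A *m z0 *m q0 + A *m z1 *m q1 + A *m z2 *m q2.
Proof.
move/inj3P/inj_rinv => [Q hQ].
exists (usubmx (usubmx (Q : 'M_(1 + 1 + 1, 3)))), (dsubmx (usubmx (Q : 'M_(1 + 1 + 1, 3)))),
  (dsubmx (Q : 'M_(1 + 1 + 1, 3))) => A.
rewrite -{1}[A]mulmx1 -hQ mulmxA.
rewrite -[Q in _ *m Q](@vsubmxK _ (1 + 1) 1 3) -[usubmx _](@vsubmxK _ 1 1 3).
rewrite -mulmxA (@mul_row_col _ 3 (1 + 1) 1 3) (@mul_row_col _ 3 1 1 3).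
by rewrite !col_mxKu !col_mxKd !mulmxDr !mulmxA.
Qed.

Lemma ext1 (z : 'cV[H]_3) : z != 0 -> exists e : 'cV[H]_3, inj2 z e.
Proof.
move/inj1 => h; have [k hk] := @ext _ 3 1 z isT h.
by exists (delta_mx k 0); apply/inj2P.
Qed.

Lemma ext2 (z z' : 'cV[H]_3) : inj2 z z' -> exists e : 'cV[H]_3, inj3 z z' e.
Proof.
move/inj2P => h; have [k hk] := @ext _ 3 2 (row_mx z z') isT h.
by exists (delta_mx k 0); apply/inj3P.
Qed.

End Part5.

Section Part6.
Variable R : rcfType.
Local Notation H := (quat R).

Lemma entry_vs n (v : 'cV[H]_n) (s : H) i j : (v *m s%:M) i j = v i 0 * s.
Proof. by rewrite !mxE big_ord1 !mxE [j]ord1 eqxx mulr1n. Qed.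

Ltac qent := apply/matrixP => ? ?; rewrite !(entry_vs, mxE); apply: quatP => /=; ring.

Lemma V1 (z e1 e2 : 'cV[H]_3) (s t u x1 x2 x3 x4 : H) :
  z *m s%:M + (e1 *m x1%:M + e2 *m x2%:M) *m t%:M + (e1 *m x3%:M + e2 *m x4%:M) *m u%:M
  = z *m s%:M + e1 *m (x1 * t + x3 * u)%:M + e2 *m (x2 * t + x4 * u)%:M.
Proof. qent. Qed.

Lemma V2 (z e1 e2 : 'cV[H]_3) (s t c1 c2 : H) :
  z *m s%:M + (e1 *m c1%:M + e2 *m c2%:M) *m t%:M
  = z *m s%:M + e1 *m (c1 * t)%:M + e2 *m (c2 * t)%:M.
Proof. qent. Qed.

Lemma V3 (e1 e2 : 'cV[H]_3) (x1 x2 l : H) :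
  e1 *m (x1 * l)%:M + e2 *m (x2 * l)%:M = (e1 *m x1%:M + e2 *m x2%:M) *m l%:M.
Proof. qent. Qed.


Definition EIG (A B : 'M[H]_3) (z : 'cV[H]_3) := exists (a : 'cV[H]_3) (b0 b1 : H),
  A *m z = a *m b0%:M /\ B *m z = a *m b1%:M.

Lemma msc (a : 'cV[H]_3) (b : H) (q : 'rV[H]_3) : a *m b%:M *m q = a *m (b *: q).
Proof. by rewrite -mulmxA mul_scalar_mx. Qed.

Lemma inj2_comb (z e1 e2 : 'cV[H]_3) (c1 c2 : H) : inj3 z e1 e2 -> (c1 != 0) || (c2 != 0) ->
  inj2 z (e1 *m c1%:M + e2 *m c2%:M).
Proof.
move=> i3 c s t; rewrite V2 => /i3 [-> h1 h2]; split => //.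
by case/orP: c => c; [apply: (mulq_eq0l c h1) | apply: (mulq_eq0l c h2)].
Qed.

Lemma split4 (x : 'cV[H]_(1 + 1 + 1 + 1)) : exists x1 x2 x3 x4 : H,
  x = col_mx (col_mx (col_mx x1%:M x2%:M) x3%:M) x4%:M.
Proof.
rewrite -[x]vsubmxK -[usubmx x]vsubmxK -[usubmx (usubmx x)]vsubmxK.
by rewrite [usubmx (usubmx (usubmx x))]mx1E [dsubmx (usubmx (usubmx x))]mx1E
  [dsubmx (usubmx x)]mx1E [dsubmx x]mx1E; do 4 eexists.
Qed.

Lemma lemS (A B : 'M[H]_3) (z : 'cV[H]_3) : z != 0 -> A *m z = 0 -> B *m z = 0 -> Dec A B 3.
Proof.
move=> nz Az Bz.
case: (classic (exists z', inj2 z z' /\ EIG A B z')) => [[z' [i2 [a [b0 [b1 [ea eb]]]]]]| nS1].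
  have [e i3] := ext2 i2.
  have [q0 [q1 [q2 dq]]] := decomp3 i3.
  rewrite (dq A) (dq B) Az Bz ea eb !mul0mx !add0r !msc.
  apply: (Dec_eq (Dec_add (Dec_term a b0 b1 q1) (Dec_add (Dec_term (A *m e) 1 0 q2)
     (Dec_term (B *m e) 0 1 q2)))).
    by rewrite scale1r scale0r mulmx0 addr0.
  by rewrite scale1r scale0r mulmx0 add0r.
have nS : forall z', inj2 z z' -> EIG A B z' -> False by move=> z' h1 h2; apply: nS1; exists z'.
have [e1 i2] := ext1 nz; have [e2 i3] := ext2 i2.
have [x xnz Mx] := @HS _ 3 (1 + 1 + 1 + 1)
   (row_mx (row_mx (row_mx (B *m e1) (B *m e2)) (- (A *m e1))) (- (A *m e2))) isT.
have [x1 [x2 [x3 [x4 ex]]]] := split4 x.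
move: Mx; rewrite ex !mul_row_col => Mx.
have {}xnz : [|| x1 != 0, x2 != 0, x3 != 0 | x4 != 0].
  move: xnz; rewrite ex; apply: contraR; rewrite !negb_or !negbK.
  by case/and4P => /eqP -> /eqP -> /eqP -> /eqP ->; rewrite !scalar_mx0 !col_mx0.
set z1 := e1 *m x1%:M + e2 *m x2%:M; set z2 := e1 *m x3%:M + e2 *m x4%:M.
have Bz12 : B *m z1 = A *m z2.
  apply/eqP; rewrite -subr_eq0 -[X in _ == X]Mx /z1 /z2 !mulmxDr !mulmxA !mulNmx.
  by rewrite opprD addrA.
have i3' : inj3 z z1 z2.
  move=> s t u; rewrite /z1 /z2 V1 => /i3 [s0 h1 h2].
  have u0 : u = 0.
    apply: NNPP => /eqP u0.
    set l := - (t * qinv u).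
    have e3 : x3 * u = - (x1 * t) by apply/eqP; rewrite -addr_eq0 addrC h1.
    have e4 : x4 * u = - (x2 * t) by apply/eqP; rewrite -addr_eq0 addrC h2.
    have x3E : x3 = x1 * l by rewrite -[x3]mulr1 -(qmulqV u0) mulrA e3 /l mulrN mulNr mulrA.
    have x4E : x4 = x2 * l by rewrite -[x4]mulr1 -(qmulqV u0) mulrA e4 /l mulrN mulNr mulrA.
    have z2E : z2 = z1 *m l%:M by rewrite /z2 x3E x4E V3.
    have x12 : (x1 != 0) || (x2 != 0).
      apply: contraLR xnz; rewrite !negb_or !negbK => /andP [/eqP x10 /eqP x20].
      by rewrite x3E x4E x10 x20 !mul0r eqxx.
    apply: (nS z1); first exact: inj2_comb i3 x12.
    by exists (A *m z1), 1, l; rewrite mulmx1 Bz12 z2E mulmxA.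
  split => //.
  apply: NNPP => t0.
  move: h1 h2; rewrite u0 !mulr0 !addr0 => h1 h2.
  have t0' : t != 0 by apply/eqP.
  have x10 := mulq_eq0r t0' h1; have x20 := mulq_eq0r t0' h2.
  have z10 : z1 = 0 by rewrite /z1 x10 x20 !scalar_mx0 !mulmx0 addr0.
  apply: (nS z2); first apply: inj2_comb i3 _.
    by move: xnz; rewrite x10 x20 eqxx.
  by exists (B *m z2), 0, 1; rewrite scalar_mx0 mulmx0 mulmx1 -Bz12 z10 mulmx0.
have [q0 [q1 [q2 dq]]] := decomp3 i3'.
rewrite (dq A) (dq B) Az Bz !mul0mx !add0r Bz12.
exact: chain2.
Qed.
End Part6.

Section Part7.
Variable R : rcfType.
Local Notation H := (quat R).

Ltac qent2 := apply/matrixP => ? ?; rewrite !(entry_vs, mxE); apply: quatP => /=; ring.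

Lemma W1 (p q : 'cV[H]_3) (a1 a2 c1 c2 w1 w2 : H) :
  (p *m a1%:M + q *m a2%:M) *m w1%:M + (p *m c1%:M + q *m c2%:M) *m w2%:M
  = p *m (a1 * w1 + c1 * w2)%:M + q *m (a2 * w1 + c2 * w2)%:M.
Proof. qent2. Qed.

Lemma W2 (p q : 'cV[H]_3) (a1 a2 al be : H) :
  q *m a1%:M + (p *m al%:M + q *m be%:M) *m a2%:M = p *m (al * a2)%:M + q *m (a1 + be * a2)%:M.
Proof. qent2. Qed.

Lemma W3 (p q r : 'cV[H]_3) (s t u : H) : u != 0 ->
  p *m s%:M + q *m t%:M + r *m u%:M = 0 ->
  r = p *m (- (s * qinv u))%:M + q *m (- (t * qinv u))%:M.
Proof.
move=> u0 e.
have e' : r *m u%:M = - (p *m s%:M + q *m t%:M) by apply/eqP; rewrite -addr_eq0 addrC e.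
rewrite -[r]mulmx1 -(qmulqV u0) scalar_mxM mulmxA e'.
move: (qinv u) => iu.
qent2.
Qed.

Lemma W4 (p q : 'cV[H]_3) (s t : H) : t != 0 -> p *m s%:M + q *m t%:M = 0 ->
  q = p *m (- (s * qinv t))%:M.
Proof.
move=> t0 e; have := @W3 0 p q 0 s t t0; rewrite mul0mx add0r => /(_ e) ->.
by rewrite mul0mx add0r.
Qed.

Lemma lemN (A B : 'M[H]_3) : (forall z, z != 0 -> ~ EIG A B z) -> Dec A B 4.
Proof.
move=> nE.
have injA : injm A.
  move=> x Ax; apply: NNPP => /eqP xnz; apply: (nE x xnz).
  by exists (B *m x), 0, 1; rewrite Ax scalar_mx0 mulmx0 mulmx1.
have [QA hQA] := inj_rinv injA.
set D := QA *m B.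
have AD : forall v : 'cV[H]_3, B *m v = A *m (D *m v).
  by move=> v; rewrite mulmxA /D mulmxA hQA mul1mx.
have noeig : forall (y : 'cV[H]_3) (l : H), y != 0 -> D *m y = y *m l%:M -> False.
  move=> y l ynz e; apply: (nE y ynz).
  by exists (A *m y), 1, l; rewrite mulmx1 AD e mulmxA.
have N1 : forall v : 'cV[H]_3, v != 0 -> inj2 v (D *m v).
  move=> v vnz s t e; case: (eqVneq t 0) => t0.
    by move: e; rewrite t0 scalar_mx0 mulmx0 addr0 => /(vcancel vnz).
  by case: (noeig _ _ vnz (W4 t0 e)).
suff [v i3] : exists v, inj3 v (D *m v) (D *m (D *m v)).
  have [q0 [q1 [q2 dq]]] := decomp3 i3.
  rewrite (dq A) (dq B) !AD; exact: chain3.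
apply: NNPP => ncyc.
have N2 : forall v : 'cV[H]_3, v != 0 -> exists al be : H, D *m (D *m v) = v *m al%:M + (D *m v) *m be%:M.
  move=> v vnz.
  have h : ~ inj3 v (D *m v) (D *m (D *m v)) by move=> h; apply: ncyc; exists v.
  have [s hs] := not_all_ex_not _ _ h.
  have [t ht] := not_all_ex_not _ _ hs.
  have [u hu] := not_all_ex_not _ _ ht.
  have [e ne] := imply_to_and _ _ hu.
  case: (eqVneq u 0) => u0.
    move: e; rewrite u0 scalar_mx0 mulmx0 addr0 => /(N1 v vnz) [s0 t0].
    by case: ne.
  by exists (- (s * qinv u)), (- (t * qinv u)); apply: W3 e.
pose v : 'cV[H]_3 := delta_mx 0 0.
have vnz : v != 0.
  by apply/eqP => /matrixP /(_ 0 0); rewrite !mxE /= => /eqP; rewrite oner_eq0.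
have [u i3u] := ext2 (N1 v vnz).
have unz : u != 0.
  apply/eqP => u0; have := i3u 0 0 1.
  rewrite u0 !scalar_mx0 !mulmx0 mul0mx !addr0 => /(_ erefl) [_ _ /eqP].
  by rewrite oner_eq0.
have [al [be hv]] := N2 v vnz.
have [ga [de hu]] := N2 u unz.
have [x xnz Mx] := @HS _ 3 (1 + 1 + 1 + 1)
   (row_mx (row_mx (row_mx v (D *m v)) (- u)) (- (D *m u))) isT.
have [a1 [a2 [b1 [b2 ex]]]] := split4 x.
move: Mx; rewrite ex !mul_row_col => Mx.
have {}xnz : [|| a1 != 0, a2 != 0, b1 != 0 | b2 != 0].
  move: xnz; rewrite ex; apply: contraR; rewrite !negb_or !negbK.
  by case/and4P => /eqP -> /eqP -> /eqP -> /eqP ->; rewrite !scalar_mx0 !col_mx0.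
set y := v *m a1%:M + (D *m v) *m a2%:M.
have yu : y = u *m b1%:M + (D *m u) *m b2%:M.
  apply/eqP; rewrite -subr_eq0 -[X in _ == X]Mx !mulNmx opprD addrA //.
have ynz : y != 0.
  apply/eqP => y0.
  have [a10 a20] := N1 v vnz a1 a2 y0.
  have [b10 b20] : b1 = 0 /\ b2 = 0 by apply: (N1 u unz); rewrite -yu.
  by move: xnz; rewrite a10 a20 b10 b20 eqxx.
have Dyv : D *m y = v *m (al * a2)%:M + (D *m v) *m (a1 + be * a2)%:M.
  by rewrite /y mulmxDr (mulmxA D v) (mulmxA D (D *m v)) hv W2.
have Dyu : D *m y = u *m (ga * b2)%:M + (D *m u) *m (b1 + de * b2)%:M.
  by rewrite yu mulmxDr (mulmxA D u) (mulmxA D (D *m u)) hu W2.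
have i2y := N1 y ynz.
pose Cm : 'M[H]_(1 + 1, 1 + 1) :=
  row_mx (col_mx b1%:M b2%:M) (col_mx (ga * b2)%:M (b1 + de * b2)%:M).
have YUC : row_mx y (D *m y) = row_mx u (D *m u) *m Cm.
  by rewrite /Cm mul_mx_row !mul_row_col -yu -Dyu.
have injC : injm Cm.
  move=> x0 Cx; apply: (proj1 (inj2P y (D *m y)) i2y).
  by rewrite YUC -mulmxA Cx mulmx0.
have [C' hC'] := inj_rinv injC.
have uY : row_mx u (D *m u) = row_mx y (D *m y) *m C'.
  by rewrite YUC -mulmxA hC' mulmx1.
have := congr1 (mulmx^~ (col_mx (1%:M : 'M[H]_1) 0)) uY.
rewrite mul_row_col mulmx1 mulmx0 addr0 -mulmxA.
set w := C' *m _.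
rewrite -[w]vsubmxK mul_row_col [usubmx w]mx1E [dsubmx w]mx1E.
set w1 := usubmx w 0 0; set w2 := dsubmx w 0 0.
rewrite Dyv /y W1 => uE.
have := i3u ((a1 * w1 + al * a2 * w2)) ((a2 * w1 + (a1 + be * a2) * w2)) (-1).
rewrite scalar_mxN mulmxN mulmx1 -uE subrr => /(_ erefl) [_ _ /eqP].
by rewrite oppr_eq0 oner_eq0.
Qed.
End Part7.

Section Part8.
Variable R : rcfType.
Local Notation H := (quat R).

Lemma mainDec (A B : 'M[H]_3) : Dec A B 4.
Proof.
case: (classic (exists z : 'cV[H]_3, z != 0 /\ EIG A B z)) =>
   [[z [nz [a [b0 [b1 [ea eb]]]]]] | nE]; last first.
  by apply: lemN => z nz h; apply: nE; exists z.
have [k hk] := cV_neq0 nz.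
pose c : 'rV[H]_3 := qinv (z k 0) *: delta_mx 0 k.
have cz : c *m z = 1%:M.
  apply/matrixP => i j; rewrite [i]ord1 [j]ord1 !mxE (bigD1 k) //= big1 ?addr0.
    by rewrite !mxE !eqxx /= mulr1 qmulVq.
  by move=> l /negPf lk; rewrite !mxE lk /= mulr0 mul0r.
have hA : (A - a *m (b0 *: c)) *m z = 0.
  by rewrite mulmxBl -mulmxA -scalemxAl cz scalemx1 ea subrr.
have hB : (B - a *m (b1 *: c)) *m z = 0.
  by rewrite mulmxBl -mulmxA -scalemxAl cz scalemx1 eb subrr.
apply: (Dec_eq (Dec_add (Dec_term a b0 b1 c) (lemS nz hA hB))); by rewrite addrC subrK.
Qed.

Definition tt (t : term R) : qtensor R 3 2 3 :=
  fun i j k => t.1.1.1 i 0 * (if j == ord0 then t.1.1.2 else t.1.2) * t.2 0 k.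

Lemma foldr_sum (I : Type) (r : seq I) (f : I -> H) :
  foldr (@qadd R) (qzero R) (map f r) = \sum_(x <- r) f x.
Proof. by elim: r => [|x r IH] /=; rewrite ?big_nil ?big_cons ?IH. Qed.

Theorem main (T : qtensor R 3 2 3) : qrank_le T 4.
Proof.
pose A : 'M[H]_3 := \matrix_(i, k) T i ord0 k.
pose B : 'M[H]_3 := \matrix_(i, k) T i ord_max k.
have [s [sz [eA eB]]] := mainDec A B.
have eT : forall i j k, T i j k = \sum_(t <- s) tt t i j k.
  move=> i [[|[|j]] lj] k //.
    have -> : T i (Ordinal lj) k = A i k by rewrite mxE; congr T; apply: val_inj.
    rewrite eA summxE; apply: (@eq_bigr H) => t _.
    by rewrite /tt /tA !mxE big_ord1 !mxE mulrA.
  have -> : T i (Ordinal lj) k = B i k by rewrite mxE; congr T; apply: val_inj.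
  rewrite eB summxE; apply: (@eq_bigr H) => t _.
  by rewrite /tt /tB !mxE big_ord1 !mxE mulrA.
pose p (t : term R) := [exists i, exists j, exists k, tt t i j k != 0].
pose s' := filter p s.
have eT' : forall i j k, T i j k = \sum_(t <- s') tt t i j k.
  move=> i j k; rewrite eT big_filter [RHS]big_rmcond // => t.
  rewrite /p negb_exists => /forallP /(_ i).
  rewrite negb_exists => /forallP /(_ j); rewrite negb_exists => /forallP /(_ k).
  by rewrite negbK => /eqP.
pose t0 : term R := (0, 0, 0, 0).
exists (size s'), (fun l => tt (nth t0 s' l)); split; last split.
- by apply: leq_trans sz; rewrite size_filter count_size.
- move=> l; have : p (nth t0 s' l).
    have : nth t0 s' l \in s' by apply: mem_nth.
    by rewrite mem_filter => /andP [].
  case/existsP => i /existsP [j] /existsP [k] nz; split; first by exists i, j, k; apply/eqP.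
  exists (fun i => (nth t0 s' l).1.1.1 i 0),
    (fun j => if j == ord0 then (nth t0 s' l).1.1.2 else (nth t0 s' l).1.2),
    (fun k => (nth t0 s' l).2 0 k) => i' j' k'.
  by [].
- move=> i j k; rewrite /tsum -map_comp foldr_sum eT' big_enum /= (big_nth t0) big_mkord.
  by apply: eq_bigl => l; rewrite inE.
Qed.
End Part8.


Theorem mainTheorem12 (R : rcfType) (T : qtensor R 3 2 3) : qrank_le T 4.
Proof. exact: main. Qed.
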